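(* Let $X$ be a metric space and $Y$ be a uniformly locally finite metric space. Every uniformly finite-to-one coarse quotient map $f:X\to Y$ is uniformly coarsely finite-to-one, i.e. coarsely $n$-to-1 for some $n\in\mathbb N$.
   Context: U.l.f.: for every $r>0$, $\sup_{y}|B(y,r)|<\infty$. $f$ is uniformly finite-to-one if $\sup_{y\in Y}|f^{-1}(y)|<\infty$. Coarse quotient: $f$ is coarse ($\sup\{\partial(f(x),f(y)):d(x,y)\le t\}<\infty$ for all $t$) and there is $K>0$ such that for every $\varepsilon>0$ there is $\delta>0$ with $B(f(x),\varepsilon)\subset f(B(x,\delta))^K$ for all $x$ (closed balls, $A^K=\{y:\partial(y,A)\le K\}$). For $n\in\mathbb N$, $f$ is coarsely $n$-to-1 if for each $s>0$ there is $r>0$ such that for every $B\subset Y$ with $\mathrm{diam}(B)\le s$ there are $A_1,\dots,A_n\subset X$ with $\mathrm{diam}(A_i)\le r$ and $f^{-1}(B)\subset\bigcup_{i=1}^nA_i$. *)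

(* Defs.v *)
From Stdlib Require Import Reals List.
Open Scope R_scope.

Definition is_metric {X : Type} (d : X -> X -> R) : Prop :=
  (forall x y, 0 <= d x y) /\
  (forall x y, d x y = 0 <-> x = y) /\
  (forall x y, d x y = d y x) /\
  (forall x y z, d x z <= d x y + d y z).

Definition card_le {X : Type} (S : X -> Prop) (N : nat) : Prop :=
  exists l : list X, (length l <= N)%nat /\ forall z, S z -> In z l.

Definition ball {X : Type} (d : X -> X -> R) (x : X) (r : R) : X -> Prop :=
  fun z => d x z <= r.

Definition ulf {Y : Type} (dY : Y -> Y -> R) : Prop :=
  forall r, 0 < r -> exists N : nat, forall y, card_le (ball dY y r) N.

Definition unif_finite_to_one {X Y : Type} (f : X -> Y) : Prop :=
  exists N : nat, forall y, card_le (fun x => f x = y) N.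

Definition coarse {X Y : Type} (dX : X -> X -> R) (dY : Y -> Y -> R)
  (f : X -> Y) : Prop :=
  forall t, exists S, forall x x', dX x x' <= t -> dY (f x) (f x') <= S.

(* dist(y, A) <= K, i.e. inf_{a in A} d(y,a) <= K, written out *)
Definition dist_set_le {Y : Type} (dY : Y -> Y -> R) (y : Y) (A : Y -> Prop)
  (K : R) : Prop :=
  forall e, 0 < e -> exists a, A a /\ dY y a < K + e.

Definition coarse_quotient {X Y : Type} (dX : X -> X -> R) (dY : Y -> Y -> R)
  (f : X -> Y) : Prop :=
  coarse dX dY f /\
  exists K, 0 < K /\
    forall eps, 0 < eps -> exists delta, 0 < delta /\
      forall x y, ball dY (f x) eps y ->
        dist_set_le dY y (fun y' => exists x', ball dX x delta x' /\ y' = f x') K.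

Definition diam_le {X : Type} (d : X -> X -> R) (B : X -> Prop) (s : R) : Prop :=
  forall a b, B a -> B b -> d a b <= s.

Definition coarsely_n_to_1 {X Y : Type} (dX : X -> X -> R) (dY : Y -> Y -> R)
  (f : X -> Y) (n : nat) : Prop :=
  forall s, 0 < s -> exists r, 0 < r /\
    forall B : Y -> Prop, diam_le dY B s ->
      exists A : nat -> X -> Prop,
        (forall i, (i < n)%nat -> diam_le dX (A i) r) /\
        (forall x, B (f x) -> exists i, (i < n)%nat /\ A i x).

(* Main.v *)
Require Import Defs.
From Stdlib Require Import Reals Lra Lia List Classical.
Open Scope R_scope.

Lemma pre_card {X Y : Type} (f : X -> Y) (N : nat)
  (HN : forall y, card_le (fun x => f x = y) N) (S : Y -> Prop) (M : nat) :
  card_le S M -> card_le (fun x => S (f x)) (M * N).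
Proof.
  intros [l [Hl Hin]].
  assert (G : forall l : list Y, exists L : list X,
    (length L <= length l * N)%nat /\ forall x, In (f x) l -> In x L).
  { induction l0 as [|y l0 IH].
    - exists nil. split; simpl; [lia|]. intros x [].
    - destruct IH as [L2 [H2 H2']]. destruct (HN y) as [L1 [H1 H1']].
      exists (L1 ++ L2). split.
      + rewrite length_app. simpl. lia.
      + intros x [Hx|Hx]; apply in_or_app; [left; apply H1'; auto | right; auto]. }
  destruct (G l) as [L [HL HL']]. exists L. split.
  - pose proof (Nat.mul_le_mono_r _ _ N Hl). lia.
  - intros x Hx. apply HL', Hin, Hx.
Qed.

Theorem proposition3p3 (X Y : Type) (dX : X -> X -> R) (dY : Y -> Y -> R)
  (f : X -> Y) :
  is_metric dX -> is_metric dY -> ulf dY ->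
  unif_finite_to_one f -> coarse_quotient dX dY f ->
  exists n : nat, coarsely_n_to_1 dX dY f n.
Proof.
  intros [_ [_ [Hsym Htri]]] _ H2 [N HN] [_ [K [HK Hq]]].
  destruct (H2 (K+1)) as [M HM]; [lra|].
  exists (M*N)%nat. intros s hs.
  destruct (Hq s hs) as [delta [hd Hd]].
  exists (2*delta). split; [lra|]. intros B HB.
  destruct (classic (exists x0, B (f x0))) as [[x0 Hx0]|Hn].
  - destruct (pre_card f N HN _ M (HM (f x0))) as [L [HL HinL]].
    exists (fun i x => exists z, nth_error L i = Some z /\ dX z x <= delta).
    split.
    + intros i hi a b [z [Hz Ha]] [z' [Hz' Hb]]. rewrite Hz in Hz'.
      inversion Hz'; subst.
      pose proof (Htri a z' b). rewrite (Hsym a z') in H. lra.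
    + intros x Hx.
      assert (hb : ball dY (f x) s (f x0)) by (apply HB; auto).
      destruct (Hd x (f x0) hb 1 Rlt_0_1) as [a [[x'' [Hx'' ->]] Ha]].
      assert (Hi : In x'' L).
      { apply HinL. unfold ball. lra. }
      destruct (In_nth_error _ _ Hi) as [i Hi'].
      exists i. split.
      * assert (nth_error L i <> None) by congruence.
        apply nth_error_Some in H. lia.
      * exists x''. split; auto. unfold ball in Hx''. rewrite Hsym. lra.
  - exists (fun _ _ => False). split.
    + intros i hi a b [].
    + intros x Hx. exfalso. apply Hn. eauto.
Qed.
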